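(* For every $\epsilon>0$ there exists a trigonometric polynomial $f$ on $\mathbb T^2$ such that $$\|P_xP_yf\|_1+\|(I-P_xP_y)f\|_1\le\epsilon\,|||f|||.$$
   Context: $\mathbb T=\mathbb R/2\pi\mathbb Z$ carries normalized Lebesgue measure, and points of $\mathbb T^2$ are written $(x,y)$. For $f\in L^2(\mathbb T^2)$ with Fourier coefficients $\hat f(m,n)$: - $P_x$ is the orthogonal projection onto $H^2_x=\{\hat f(m,n)=0 \text{ for } m<0\}$, and $P_{-x}=I-P_x$; - $P_y$ is the orthogonal projection onto $H^2_y=\{\hat f(m,n)=0 \text{ for } n<0\}$, and $P_{-y}=I-P_y$. For a trigonometric polynomial $f$ on $\mathbb T^2$ set $$|||f|||_{(x)}=\|P_xf\|_1+\|P_{-x}P_yf\|_1+\|P_{-x}P_{-y}f\|_1,\qquad |||f|||_{(y)}=\|P_yf\|_1+\|P_{-y}P_xf\|_1+\|P_{-y}P_{-x}f\|_1,$$ and $$|||f|||=\inf\{|||g|||_{(x)}+|||h|||_{(y)}: f=g+h,\ g,h \text{ trigonometric polynomials}\}.$$ *)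

(* Defs.v *)
From Stdlib Require Import Reals ZArith List.
From Coquelicot Require Import Coquelicot.
Open Scope R_scope.

(* A trigonometric polynomial on T^2 is given by a finite list of terms
   ((m,n), c) standing for c * e^{i(m x + n y)}; its Fourier coefficient at
   (m,n) is the sum of the c's attached to (m,n). *)
Definition trigpoly := list ((Z * Z) * C).

Definition tp_eval (p : trigpoly) (x y : R) : C :=
  fold_right (fun t acc =>
      let '((m, n), c) := t in
      Cplus (Cmult c (cos (IZR m * x + IZR n * y), sin (IZR m * x + IZR n * y))) acc)
    (RtoC 0) p.

(* L^1 norm w.r.t. normalized Lebesgue measure on T^2 = [0,2pi)^2
   (integrand is continuous, so the iterated Riemann integral is the Lebesgue one). *)
Definition L1norm (p : trigpoly) : R :=
  RInt (fun x => RInt (fun y => Cmod (tp_eval p x y)) 0 (2 * PI)) 0 (2 * PI)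
  / (4 * PI ^ 2).

Definition Px  (p : trigpoly) : trigpoly := filter (fun t => Z.leb 0 (fst (fst t))) p.
Definition Pmx (p : trigpoly) : trigpoly := filter (fun t => Z.ltb (fst (fst t)) 0) p.
Definition Py  (p : trigpoly) : trigpoly := filter (fun t => Z.leb 0 (snd (fst t))) p.
Definition Pmy (p : trigpoly) : trigpoly := filter (fun t => Z.ltb (snd (fst t)) 0) p.
Definition I_minus_PxPy (p : trigpoly) : trigpoly :=
  filter (fun t => negb (Z.leb 0 (fst (fst t)) && Z.leb 0 (snd (fst t)))) p.

Definition triple_x (f : trigpoly) : R :=
  L1norm (Px f) + L1norm (Pmx (Py f)) + L1norm (Pmx (Pmy f)).
Definition triple_y (f : trigpoly) : R :=
  L1norm (Py f) + L1norm (Pmy (Px f)) + L1norm (Pmy (Pmx f)).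

Definition triple (f : trigpoly) : Rbar :=
  Glb_Rbar (fun r => exists g h : trigpoly,
      (forall x y, tp_eval f x y = Cplus (tp_eval g x y) (tp_eval h x y)) /\
      r = triple_x g + triple_y h).

(* Main.v *)
Require Import Defs.
From Stdlib Require Import Reals ZArith List Lra Lia.
From Coquelicot Require Import Coquelicot.
Open Scope R_scope.

Definition lsum {A} (f : A -> R) (l : list A) : R :=
  fold_right (fun a acc => f a + acc) 0 l.

Lemma lsum_nil {A} (f : A -> R) : lsum f nil = 0. Proof. reflexivity. Qed.
Lemma lsum_cons {A} (f : A -> R) a l : lsum f (a :: l) = f a + lsum f l.
Proof. reflexivity. Qed.
Lemma lsum_app {A} (f : A -> R) l1 l2 : lsum f (l1 ++ l2) = lsum f l1 + lsum f l2.
Proof. induction l1; simpl; [lra| rewrite IHl1; lra]. Qed.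
Lemma lsum_ext {A} (f g : A -> R) l : (forall a, In a l -> f a = g a) -> lsum f l = lsum g l.
Proof. induction l; simpl; intros H; auto. rewrite H, IHl; auto. Qed.
Lemma lsum_le {A} (f g : A -> R) l : (forall a, In a l -> f a <= g a) -> lsum f l <= lsum g l.
Proof. induction l; simpl; intros H; [lra|]. pose proof (H a (or_introl eq_refl)).
  pose proof (IHl (fun b Hb => H b (or_intror Hb))). lra. Qed.
Lemma lsum_plus {A} (f g : A -> R) l : lsum (fun a => f a + g a) l = lsum f l + lsum g l.
Proof. induction l; simpl; [lra| rewrite IHl; lra]. Qed.
Lemma lsum_scal {A} (f : A -> R) c l : lsum (fun a => c * f a) l = c * lsum f l.
Proof. induction l; simpl; [lra| rewrite IHl; lra]. Qed.
Lemma lsum_filter {A} (f : A -> R) (P : A -> bool) l :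
  lsum f (filter P l) = lsum (fun a => if P a then f a else 0) l.
Proof. induction l; simpl; auto. destruct (P a); simpl; rewrite IHl; lra. Qed.
Lemma lsum_abs {A} (f : A -> R) l : Rabs (lsum f l) <= lsum (fun a => Rabs (f a)) l.
Proof. induction l; simpl. rewrite Rabs_R0; lra.
  eapply Rle_trans; [apply Rabs_triang|]. lra. Qed.
Lemma lsum_swap {A B} (f : A -> B -> R) l1 l2 :
  lsum (fun a => lsum (fun b => f a b) l2) l1 = lsum (fun b => lsum (fun a => f a b) l1) l2.
Proof. induction l1; simpl.
  - induction l2; simpl; auto. rewrite <- IHl2; lra.
  - rewrite IHl1, <- lsum_plus. reflexivity. Qed.

Definition term (t : (Z*Z)*C) (x y : R) : C :=
  let '((m,n),c) := t in Cmult c (cos (IZR m * x + IZR n * y), sin (IZR m * x + IZR n * y)).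

Lemma tp_eval_cons t p x y : tp_eval (t::p) x y = Cplus (term t x y) (tp_eval p x y).
Proof. destruct t as [[m n] c]; reflexivity. Qed.
Lemma tp_eval_nil x y : tp_eval nil x y = RtoC 0.
Proof. reflexivity. Qed.

Ltac ceq := apply injective_projections; simpl; ring.

Lemma tp_eval_app p q x y : tp_eval (p ++ q) x y = Cplus (tp_eval p x y) (tp_eval q x y).
Proof. induction p. change (nil ++ q) with q. rewrite tp_eval_nil. destruct (tp_eval q x y); unfold Cplus, RtoC; ceq.
  change ((a::p)++q) with (a::(p++q)). rewrite !tp_eval_cons, IHp. destruct (term a x y), (tp_eval p x y), (tp_eval q x y).
  unfold Cplus; ceq. Qed.

Lemma tp_eval_filter (P : (Z*Z)*C -> bool) l x y :
  Cplus (tp_eval (filter P l) x y) (tp_eval (filter (fun t => negb (P t)) l) x y) = tp_eval l x y.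
Proof. induction l; cbn [filter]. rewrite tp_eval_nil; unfold Cplus, RtoC; ceq.
  destruct (P a); cbn [negb]; rewrite !tp_eval_cons, <- IHl;
  destruct (term a x y), (tp_eval (filter P l) x y), (tp_eval (filter (fun t => negb (P t)) l) x y);
  unfold Cplus; ceq. Qed.

Lemma filter_filter2 {A} (P Q : A -> bool) l :
  filter P (filter Q l) = filter (fun a => Q a && P a)%bool l.
Proof. induction l; simpl; auto. destruct (Q a); simpl; rewrite ?IHl; auto.
  Qed.

Definition conjmul (p q : trigpoly) : trigpoly :=
  flat_map (fun a => map (fun b => ((fst (fst a) - fst (fst b), snd (fst a) - snd (fst b))%Z,
                                     Cmult (snd a) (Cconj (snd b)))) q) p.

Lemma term_conj a b x y :
  term ((fst (fst a) - fst (fst b), snd (fst a) - snd (fst b))%Z, Cmult (snd a) (Cconj (snd b))) x y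
  = Cmult (term a x y) (Cconj (term b x y)).
Proof. destruct a as [[m n] c], b as [[m' n'] d]; simpl.
  rewrite !minus_IZR.
  replace ((IZR m - IZR m') * x + (IZR n - IZR n') * y) with
    ((IZR m * x + IZR n * y) - (IZR m' * x + IZR n' * y)) by ring.
  rewrite cos_minus, sin_minus. destruct c, d. unfold Cmult, Cconj; ceq. Qed.

Definition cm1 (a : (Z*Z)*C) (b : (Z*Z)*C) : (Z*Z)*C :=
  ((fst (fst a) - fst (fst b), snd (fst a) - snd (fst b))%Z, Cmult (snd a) (Cconj (snd b))).

Lemma tp_eval_map_cm1 a q x y : tp_eval (map (cm1 a) q) x y = Cmult (term a x y) (Cconj (tp_eval q x y)).
Proof. induction q; cbn [map]. rewrite !tp_eval_nil. unfold Cmult, Cconj, RtoC; destruct (term a x y); ceq.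
  rewrite !tp_eval_cons. unfold cm1 at 1. rewrite term_conj, IHq.
  destruct (term a x y), (term a0 x y), (tp_eval q x y); unfold Cmult, Cconj, Cplus; ceq. Qed.

Lemma tp_eval_conjmul p q x y : tp_eval (conjmul p q) x y = Cmult (tp_eval p x y) (Cconj (tp_eval q x y)).
Proof. induction p.
  - change (conjmul nil q) with (@nil ((Z*Z)*C)). rewrite !tp_eval_nil.
    unfold Cmult, RtoC. destruct (Cconj (tp_eval q x y)); ceq.
  - change (conjmul (a::p) q) with (map (cm1 a) q ++ conjmul p q).
    rewrite tp_eval_app, IHp, tp_eval_cons, tp_eval_map_cm1.
    destruct (term a x y), (tp_eval p x y), (tp_eval q x y); unfold Cmult, Cconj, Cplus; ceq.
Qed.


Lemma sin_periodZ x z : sin (x + 2 * IZR z * PI) = sin x.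
Proof. destruct (Z_le_gt_dec 0 z).
  - rewrite <- (Z2Nat.id z) by lia. rewrite <- INR_IZR_INZ. apply sin_period.
  - replace x with ((x + 2 * IZR z * PI) + 2 * INR (Z.to_nat (- z)) * PI) at 2.
    rewrite sin_period; auto. rewrite INR_IZR_INZ, Z2Nat.id by lia. rewrite opp_IZR; ring.
Qed.
Lemma cos_periodZ x z : cos (x + 2 * IZR z * PI) = cos x.
Proof. destruct (Z_le_gt_dec 0 z).
  - rewrite <- (Z2Nat.id z) by lia. rewrite <- INR_IZR_INZ. apply cos_period.
  - replace x with ((x + 2 * IZR z * PI) + 2 * INR (Z.to_nat (- z)) * PI) at 2.
    rewrite cos_period; auto. rewrite INR_IZR_INZ, Z2Nat.id by lia. rewrite opp_IZR; ring.
Qed.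

Lemma is_RInt_val (f : R -> R) a b (u v : R) : is_RInt f a b u -> u = v -> is_RInt f a b v.
Proof. intros H ->; exact H. Qed.

Lemma is_RInt_cos_lin A N :
  is_RInt (fun y => cos (A + IZR N * y)) 0 (2*PI) (if Z.eqb N 0 then 2*PI*cos A else 0).
Proof. destruct (Z.eqb_spec N 0) as [->|HN].
  - apply is_RInt_ext with (fun _ => cos A). intros; f_equal; simpl; ring.
    eapply is_RInt_val. apply is_RInt_const. unfold scal; simpl; unfold mult; simpl; ring.
  - assert (HN' : IZR N <> 0) by (apply not_0_IZR; auto).
    eapply is_RInt_val.
    apply (is_RInt_derive (fun y => sin (A + IZR N * y) / IZR N)).
    + intros y _. auto_derive; auto. field; auto.
    + intros y _. apply (@ex_derive_continuous R_AbsRing R_NormedModule). auto_derive; auto.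
    + unfold minus, plus, opp; simpl.
      replace (A + IZR N * (2 * PI)) with (A + 2 * IZR N * PI) by ring.
      rewrite sin_periodZ. replace (A + IZR N * 0) with A by ring. field; auto.
Qed.

Lemma is_RInt_sin_lin A N :
  is_RInt (fun y => sin (A + IZR N * y)) 0 (2*PI) (if Z.eqb N 0 then 2*PI*sin A else 0).
Proof. destruct (Z.eqb_spec N 0) as [->|HN].
  - apply is_RInt_ext with (fun _ => sin A). intros; f_equal; simpl; ring.
    eapply is_RInt_val. apply is_RInt_const. unfold scal; simpl; unfold mult; simpl; ring.
  - assert (HN' : IZR N <> 0) by (apply not_0_IZR; auto).
    eapply is_RInt_val.
    apply (is_RInt_derive (fun y => - cos (A + IZR N * y) / IZR N)).
    + intros y _. auto_derive; auto. field; auto.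
    + intros y _. apply (@ex_derive_continuous R_AbsRing R_NormedModule). auto_derive; auto.
    + unfold minus, plus, opp; simpl.
      replace (A + IZR N * (2 * PI)) with (A + 2 * IZR N * PI) by ring.
      rewrite cos_periodZ. replace (A + IZR N * 0) with A by ring. field; auto.
Qed.

Lemma is_RInt_lin2 (f g : R -> R) a b u v al be :
  is_RInt f a b u -> is_RInt g a b v ->
  is_RInt (fun y => al * f y + be * g y) a b (al * u + be * v).
Proof. intros Hf Hg. apply (is_RInt_plus (fun y => al * f y) (fun y => be * g y)).
  apply (is_RInt_scal f a b al u Hf). apply (is_RInt_scal g a b be v Hg). Qed.

Lemma is_RInt_extR (f g : R -> R) a b (v : R) :
  (forall x, f x = g x) -> is_RInt f a b v -> is_RInt g a b v.
Proof. intros H Hf. apply is_RInt_ext with f; auto. Qed.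


Definition Pf (p q : trigpoly) (x y : R) : R := fst (Cmult (tp_eval p x y) (Cconj (tp_eval q x y))).
Definition P1 (t s : (Z*Z)*C) (x y : R) : R := fst (Cmult (term t x y) (Cconj (term s x y))).

Lemma Pf_expand p q x y : Pf p q x y = lsum (fun t => lsum (fun s => P1 t s x y) q) p.
Proof. unfold Pf. induction p.
  - rewrite tp_eval_nil. simpl. destruct (tp_eval q x y); simpl. ring.
  - rewrite tp_eval_cons, lsum_cons, <- IHp.
    assert (H : fst (Cmult (term a x y) (Cconj (tp_eval q x y))) = lsum (fun s => P1 a s x y) q).
    { clear IHp. induction q. rewrite tp_eval_nil. destruct (term a x y); simpl; ring.
      rewrite tp_eval_cons, lsum_cons, <- IHq. unfold P1.
      destruct (term a x y), (term a0 x y), (tp_eval q x y); simpl; ring. }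
    rewrite <- H. destruct (term a x y), (tp_eval p x y), (tp_eval q x y); simpl; ring.
Qed.

Definition Jy (t s : (Z*Z)*C) (x : R) : R :=
  let '((M,N),c) := cm1 t s in
  if Z.eqb N 0 then 2*PI*(fst c * cos (IZR M * x) - snd c * sin (IZR M * x)) else 0.

Definition dlt (t s : (Z*Z)*C) : R :=
  if (Z.eqb (fst (fst t)) (fst (fst s)) && Z.eqb (snd (fst t)) (snd (fst s)))%bool
  then fst (Cmult (snd t) (Cconj (snd s))) else 0.

Definition S2 (p q : trigpoly) : R := lsum (fun t => lsum (fun s => dlt t s) q) p.

Lemma P1_inner t s x : is_RInt (fun y => P1 t s x y) 0 (2*PI) (Jy t s x).
Proof.
  apply is_RInt_extR with (fun y => fst (term (cm1 t s) x y)).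
  { intros y. unfold P1, cm1. rewrite term_conj. reflexivity. }
  unfold Jy. destruct (cm1 t s) as [[M N] c]. simpl term.
  apply is_RInt_extR with (fun y => fst c * cos (IZR M * x + IZR N * y) + (- snd c) * sin (IZR M * x + IZR N * y)).
  { intros y. destruct c; simpl; ring. }
  eapply is_RInt_val. apply is_RInt_lin2; [apply is_RInt_cos_lin | apply is_RInt_sin_lin].
  destruct (Z.eqb N 0); ring.
Qed.

Lemma Jy_outer t s : is_RInt (fun x => Jy t s x) 0 (2*PI) (4*PI^2 * dlt t s).
Proof.
  unfold Jy, dlt. destruct t as [[m n] c], s as [[m' n'] d]. unfold cm1; simpl fst; simpl snd.
  destruct (Z.eqb_spec (n - n') 0) as [Hn|Hn].
  - apply is_RInt_extR with (fun x => (2*PI * fst (Cmult c (Cconj d))) * cos (0 + IZR (m - m') * x)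
        + (- (2*PI * snd (Cmult c (Cconj d)))) * sin (0 + IZR (m - m') * x)).
    { intros x. destruct c, d. unfold Cmult, Cconj; simpl. rewrite !Rplus_0_l. ring. }
    eapply is_RInt_val. apply is_RInt_lin2; [apply is_RInt_cos_lin | apply is_RInt_sin_lin].
    rewrite cos_0, sin_0.
    destruct (Z.eqb_spec (m - m') 0); destruct (Z.eqb_spec m m'); destruct (Z.eqb_spec n n');
      simpl; try lia; try ring.
  - eapply is_RInt_val. apply (is_RInt_const 0 (2*PI) 0).
    destruct (Z.eqb_spec n n'); try lia. rewrite Bool.andb_false_r.
    unfold scal; simpl; unfold mult; simpl; ring.
Qed.

Lemma is_RInt_lsum {A} (F : A -> R -> R) (v : A -> R) l a b :
  (forall t, In t l -> is_RInt (F t) a b (v t)) ->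
  is_RInt (fun y => lsum (fun t => F t y) l) a b (lsum v l).
Proof. induction l; intros H; simpl.
  - eapply is_RInt_val. apply (is_RInt_const a b 0). unfold scal; simpl; unfold mult; simpl; ring.
  - apply (is_RInt_plus (F a0) (fun y => lsum (fun t => F t y) l)).
    apply H; simpl; auto. apply IHl. intros; apply H; simpl; auto.
Qed.

Definition I2 (F : R -> R -> R) : R :=
  RInt (fun x => RInt (fun y => F x y) 0 (2*PI)) 0 (2*PI).

Definition Jpq (p q : trigpoly) (x : R) : R := lsum (fun t => lsum (fun s => Jy t s x) q) p.

Lemma Pf_inner p q x : is_RInt (fun y => Pf p q x y) 0 (2*PI) (Jpq p q x).
Proof. apply is_RInt_extR with (fun y => lsum (fun t => lsum (fun s => P1 t s x y) q) p).
  { intros; rewrite Pf_expand; reflexivity. }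
  unfold Jpq. apply (is_RInt_lsum (fun t y => lsum (fun s => P1 t s x y) q)).
  intros t _. apply (is_RInt_lsum (fun s y => P1 t s x y)). intros s _. apply P1_inner.
Qed.

Lemma Pf_outer p q : is_RInt (fun x => RInt (fun y => Pf p q x y) 0 (2*PI)) 0 (2*PI) (4*PI^2 * S2 p q).
Proof. apply is_RInt_extR with (Jpq p q).
  { intros x. symmetry. apply is_RInt_unique, Pf_inner. }
  unfold Jpq, S2. rewrite <- lsum_scal.
  apply (is_RInt_lsum (fun t x => lsum (fun s => Jy t s x) q)). intros t _.
  rewrite <- lsum_scal. apply (is_RInt_lsum (fun s x => Jy t s x)). intros s _. apply Jy_outer.
Qed.

Lemma I2_Pf p q : I2 (Pf p q) = 4*PI^2 * S2 p q.
Proof. unfold I2. apply is_RInt_unique, Pf_outer. Qed.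


Lemma Rabs_sin_le u : Rabs (sin u) <= Rabs u.
Proof. pose proof PI2_1. pose proof (SIN_bound u).
  destruct (Rle_or_lt 1 (Rabs u)) as [H0'|H0']. unfold Rabs at 1; destruct (Rcase_abs (sin u)); lra.
  destruct (Rtotal_order u 0) as [H1|[H1|H1]].
  - rewrite Rabs_left in H0' by lra. pose proof (sin_gt_x u H1).
    pose proof (sin_lt_0_var u ltac:(lra) H1). rewrite !Rabs_left; lra.
  - subst; rewrite sin_0; lra.
  - rewrite Rabs_right in H0' by lra. pose proof (sin_lt_x u H1).
    pose proof (sin_gt_0 u H1 ltac:(lra)). rewrite !Rabs_right; lra.
Qed.

Lemma cis_lip a b : Cmod (Cminus (cos a, sin a) (cos b, sin b)) <= Rabs (a - b).
Proof. unfold Cmod, Cminus, Cplus, Copp; simpl.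
  rewrite <- sqrt_Rsqr_abs. apply sqrt_le_1_alt.
  assert (E : (cos a + - cos b) * ((cos a + - cos b) * 1) + (sin a + - sin b) * ((sin a + - sin b) * 1)
              = 2 - 2 * cos (a - b)).
  { rewrite cos_minus. pose proof (sin2_cos2 a) as Ha. pose proof (sin2_cos2 b) as Hb. unfold Rsqr in *.
    replace ((cos a + - cos b) * ((cos a + - cos b) * 1) + (sin a + - sin b) * ((sin a + - sin b) * 1))
      with ((sin a * sin a + cos a * cos a) + (sin b * sin b + cos b * cos b) - 2 * (cos a * cos b + sin a * sin b)) by ring.
    rewrite Ha, Hb. ring. }
  rewrite E. replace (a - b) with (2 * ((a - b) / 2)) at 1 by field. rewrite cos_2a_sin.
  pose proof (Rabs_sin_le ((a - b) / 2)).
  assert (Rsqr (sin ((a-b)/2)) <= Rsqr ((a-b)/2)).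
  { rewrite (Rsqr_abs (sin _)), (Rsqr_abs ((a-b)/2)). apply Rsqr_incr_1; auto; apply Rabs_pos. }
  replace (Rsqr (a - b)) with (4 * Rsqr ((a - b) / 2)) by (unfold Rsqr; field).
  unfold Rsqr in *. lra.
Qed.

Lemma Cmod_rev a b : Rabs (Cmod a - Cmod b) <= Cmod (Cminus a b).
Proof. pose proof (Cmod_triangle (Cminus a b) b). pose proof (Cmod_triangle (Cminus b a) a).
  replace (Cplus (Cminus a b) b) with a in H by (destruct a, b; unfold Cminus, Cplus, Copp; apply injective_projections; simpl; ring).
  replace (Cplus (Cminus b a) a) with b in H0 by (destruct a, b; unfold Cminus, Cplus, Copp; apply injective_projections; simpl; ring).
  replace (Cmod (Cminus b a)) with (Cmod (Cminus a b)) in H0.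
  unfold Rabs; destruct (Rcase_abs _); lra.
  replace (Cminus b a) with (Copp (Cminus a b)) by (destruct a, b; unfold Cminus, Cplus, Copp; apply injective_projections; simpl; ring).
  unfold Cmod, Copp; simpl. f_equal; ring.
Qed.

Definition Lip (p : trigpoly) : R :=
  lsum (fun t => Cmod (snd t) * (Rabs (IZR (fst (fst t))) + Rabs (IZR (snd (fst t))))) p.

Lemma Lip_nonneg p : 0 <= Lip p.
Proof. induction p; simpl; [lra|]. pose proof (Cmod_ge_0 (snd a)).
  pose proof (Rabs_pos (IZR (fst (fst a)))). pose proof (Rabs_pos (IZR (snd (fst a)))).
  unfold Lip in *; simpl. nra. Qed.

Lemma term_lip t x y x' y' :
  Cmod (Cminus (term t x y) (term t x' y')) <=
  Cmod (snd t) * (Rabs (IZR (fst (fst t))) + Rabs (IZR (snd (fst t)))) * (Rabs (x - x') + Rabs (y - y')).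
Proof. destruct t as [[m n] c]. simpl.
  replace (Cminus (Cmult c (cos (IZR m * x + IZR n * y), sin (IZR m * x + IZR n * y)))
                  (Cmult c (cos (IZR m * x' + IZR n * y'), sin (IZR m * x' + IZR n * y'))))
     with (Cmult c (Cminus (cos (IZR m * x + IZR n * y), sin (IZR m * x + IZR n * y))
                  (cos (IZR m * x' + IZR n * y'), sin (IZR m * x' + IZR n * y')))).
  2:{ destruct c; unfold Cminus, Cmult, Cplus, Copp; apply injective_projections; simpl; ring. }
  rewrite Cmod_mult. rewrite Rmult_assoc. apply Rmult_le_compat_l. apply Cmod_ge_0.
  eapply Rle_trans. apply cis_lip.
  replace (IZR m * x + IZR n * y - (IZR m * x' + IZR n * y')) with (IZR m * (x - x') + IZR n * (y - y')) by ring.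
  eapply Rle_trans. apply Rabs_triang. rewrite !Rabs_mult.
  pose proof (Rabs_pos (IZR m)). pose proof (Rabs_pos (IZR n)).
  pose proof (Rabs_pos (x - x')). pose proof (Rabs_pos (y - y')). nra.
Qed.

Lemma tp_lip p x y x' y' :
  Cmod (Cminus (tp_eval p x y) (tp_eval p x' y')) <= Lip p * (Rabs (x - x') + Rabs (y - y')).
Proof. induction p.
  - rewrite !tp_eval_nil. unfold Lip; simpl.
    replace (Cminus (RtoC 0) (RtoC 0)) with (RtoC 0) by (unfold RtoC, Cminus, Cplus, Copp; apply injective_projections; simpl; ring).
    rewrite Cmod_0. lra.
  - rewrite !tp_eval_cons.
    replace (Cminus (Cplus (term a x y) (tp_eval p x y)) (Cplus (term a x' y') (tp_eval p x' y')))
      with (Cplus (Cminus (term a x y) (term a x' y')) (Cminus (tp_eval p x y) (tp_eval p x' y'))).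
    2:{ destruct (term a x y), (term a x' y'), (tp_eval p x y), (tp_eval p x' y');
        unfold Cminus, Cplus, Copp; apply injective_projections; simpl; ring. }
    eapply Rle_trans. apply Cmod_triangle. pose proof (term_lip a x y x' y').
    unfold Lip in *; simpl. lra.
Qed.

Lemma lip_cont (f : R -> R) L x : 0 <= L -> (forall u v, Rabs (f u - f v) <= L * Rabs (u - v)) -> continuous f x.
Proof. intros HL H. apply continuity_pt_filterlim.
  intros eps Heps. exists (eps / (L + 1)). split. apply Rdiv_lt_0_compat; lra.
  intros y [_ Hy]. unfold R_dist in *. eapply Rle_lt_trans. apply H.
  apply Rle_lt_trans with (L * (eps / (L+1))). apply Rmult_le_compat_l; [lra| left; exact Hy].
  apply Rlt_le_trans with ((L+1) * (eps / (L+1))). apply Rmult_lt_compat_r. apply Rdiv_lt_0_compat; lra. lra.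
  right; field; lra.
Qed.

Lemma PI_pos : 0 < PI. Proof. apply PI_RGT_0. Qed.

Lemma lip2_int (F : R -> R -> R) L : 0 <= L ->
  (forall x y x' y', Rabs (F x y - F x' y') <= L * (Rabs (x - x') + Rabs (y - y'))) ->
  (forall x, ex_RInt (F x) 0 (2*PI)) /\ ex_RInt (fun x => RInt (F x) 0 (2*PI)) 0 (2*PI).
Proof. intros HL H.
  assert (H1 : forall x, ex_RInt (F x) 0 (2*PI)).
  { intros x. apply (ex_RInt_continuous (V:=R_CompleteNormedModule)). intros z _. apply (lip_cont _ L); auto.
    intros u v. eapply Rle_trans. apply H. unfold Rminus at 1. rewrite Rplus_opp_r, Rabs_R0. lra. }
  split; auto. apply (ex_RInt_continuous (V:=R_CompleteNormedModule)). intros z _. apply (lip_cont _ (2*PI*L)).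
  pose proof PI_pos; nra.
  intros u v. assert (E : RInt (F u) 0 (2*PI) - RInt (F v) 0 (2*PI) = RInt (fun y => F u y - F v y) 0 (2*PI)).
  { symmetry. apply (RInt_minus (V:=R_CompleteNormedModule) (F u) (F v)); auto. }
  rewrite E. eapply Rle_trans. apply abs_RInt_le_const. pose proof PI_pos; lra.
  apply (ex_RInt_minus (V:=R_NormedModule) (F u) (F v)); auto.
  intros t _. eapply Rle_trans. apply H. unfold Rminus at 2. rewrite Rplus_opp_r, Rabs_R0. apply Rle_refl.
  right; ring.
Qed.

Lemma Cmod_int p : (forall x, ex_RInt (fun y => Cmod (tp_eval p x y)) 0 (2*PI)) /\
  ex_RInt (fun x => RInt (fun y => Cmod (tp_eval p x y)) 0 (2*PI)) 0 (2*PI).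
Proof. apply (lip2_int (fun x y => Cmod (tp_eval p x y)) (Lip p)). apply Lip_nonneg.
  intros. eapply Rle_trans. apply Cmod_rev. apply tp_lip. Qed.

Lemma I2_le (F G : R -> R -> R) :
  (forall x, ex_RInt (F x) 0 (2*PI)) -> (forall x, ex_RInt (G x) 0 (2*PI)) ->
  ex_RInt (fun x => RInt (F x) 0 (2*PI)) 0 (2*PI) -> ex_RInt (fun x => RInt (G x) 0 (2*PI)) 0 (2*PI) ->
  (forall x y, F x y <= G x y) -> I2 F <= I2 G.
Proof. intros H1 H2 H3 H4 H. unfold I2. pose proof PI_pos.
  apply RInt_le; auto. lra. intros x _. apply RInt_le; auto. lra. Qed.

Lemma Pf_int p q : (forall x, ex_RInt (Pf p q x) 0 (2*PI)) /\ ex_RInt (fun x => RInt (Pf p q x) 0 (2*PI)) 0 (2*PI).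
Proof. split. intros x. eexists; apply Pf_inner. eexists; apply Pf_outer. Qed.

Lemma L1norm_I2 p : L1norm p = I2 (fun x y => Cmod (tp_eval p x y)) / (4 * PI^2).
Proof. reflexivity. Qed.

Lemma L1norm_ge0 p : 0 <= L1norm p.
Proof. rewrite L1norm_I2. apply Rmult_le_pos. 2:{ left; apply Rinv_0_lt_compat. pose proof PI_pos; nra. }
  destruct (Cmod_int p). unfold I2. pose proof PI_pos. apply RInt_ge_0; auto. lra.
  intros x _. apply RInt_ge_0; auto. lra. intros; apply Cmod_ge_0. Qed.

Lemma dual_bound a q B : 0 < B -> (forall x y, Cmod (tp_eval q x y) <= B) -> S2 a q <= B * L1norm a.
Proof. intros HB Hq. pose proof PI_pos.
  destruct (Cmod_int a) as [Ha1 Ha2]. destruct (Pf_int a q) as [Hp1 Hp2].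
  assert (Hm : I2 (Pf a q) <= I2 (fun x y => B * Cmod (tp_eval a x y))).
  { apply I2_le; auto.
    - intros x. apply (ex_RInt_scal (V:=R_NormedModule)). auto.
    - apply ex_RInt_ext with (fun x => B * RInt (fun y => Cmod (tp_eval a x y)) 0 (2*PI)).
      intros x _. symmetry. apply (RInt_scal (V:=R_CompleteNormedModule)). auto.
      apply (ex_RInt_scal (V:=R_NormedModule)). auto.
    - intros x y. unfold Pf. eapply Rle_trans. apply Rle_abs.
      eapply Rle_trans. apply re_le_Cmod. rewrite Cmod_mult, Cmod_conj.
      rewrite Rmult_comm. apply Rmult_le_compat_r. apply Cmod_ge_0. auto. }
  rewrite I2_Pf in Hm. unfold I2 in Hm.
  rewrite (RInt_ext _ (fun x => B * RInt (fun y => Cmod (tp_eval a x y)) 0 (2*PI))) in Hm.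
  2:{ intros x _. apply (RInt_scal (V:=R_CompleteNormedModule)). auto. }
  rewrite (RInt_scal (V:=R_CompleteNormedModule)) in Hm by auto.
  rewrite L1norm_I2. unfold I2. change (scal B ?z) with (B * z) in Hm.
  assert (0 < 4 * PI^2) by nra.
  apply Rmult_le_reg_l with (4 * PI^2); auto. unfold Rdiv. 
  replace (4 * PI ^ 2 * (B * (RInt (fun x => RInt (fun y => Cmod (tp_eval a x y)) 0 (2 * PI)) 0 (2 * PI) * / (4 * PI ^ 2))))
    with (B * RInt (fun x => RInt (fun y => Cmod (tp_eval a x y)) 0 (2 * PI)) 0 (2 * PI)) by (field; lra).
  lra.
Qed.


Fixpoint sumn (f : nat -> R) (n : nat) : R :=
  match n with O => 0 | S n' => f n' + sumn f n' end.

Lemma sumn_ext f g n : (forall i, (i < n)%nat -> f i = g i) -> sumn f n = sumn g n.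
Proof. induction n; simpl; intros H; auto. rewrite H, IHn; auto. Qed.
Lemma sumn_le f g n : (forall i, (i < n)%nat -> f i <= g i) -> sumn f n <= sumn g n.
Proof. induction n; simpl; intros H; [lra|]. pose proof (H n ltac:(lia)). pose proof (IHn (fun i Hi => H i ltac:(lia))). lra. Qed.
Lemma sumn_plus f g n : sumn (fun i => f i + g i) n = sumn f n + sumn g n.
Proof. induction n; simpl; [lra| rewrite IHn; lra]. Qed.
Lemma sumn_minus f g n : sumn (fun i => f i - g i) n = sumn f n - sumn g n.
Proof. induction n; simpl; [lra| rewrite IHn; lra]. Qed.
Lemma sumn_scal f c n : sumn (fun i => c * f i) n = c * sumn f n.
Proof. induction n; simpl; [lra| rewrite IHn; lra]. Qed.
Lemma sumn_abs f n : Rabs (sumn f n) <= sumn (fun i => Rabs (f i)) n.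
Proof. induction n; simpl. rewrite Rabs_R0; lra. eapply Rle_trans; [apply Rabs_triang|]. lra. Qed.
Lemma sumn_split f a b : sumn f (a + b) = sumn f a + sumn (fun i => f (a + i)%nat) b.
Proof. induction b; simpl. rewrite Nat.add_0_r; lra. rewrite Nat.add_succ_r; simpl. rewrite IHb; lra. Qed.
Lemma sumn_const c n : sumn (fun _ => c) n = INR n * c.
Proof. induction n; simpl sumn. simpl; lra. rewrite IHn, S_INR; lra. Qed.
Lemma sumn_nonneg f n : (forall i, (i < n)%nat -> 0 <= f i) -> 0 <= sumn f n.
Proof. intros H. apply Rle_trans with (sumn (fun _ => 0) n). rewrite sumn_const; lra. apply sumn_le; auto. Qed.
Lemma sumn_ge f c n : (forall i, (i < n)%nat -> c <= f i) -> INR n * c <= sumn f n.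
Proof. intros H. rewrite <- sumn_const. apply sumn_le; auto. Qed.
Lemma sumn_swap (f : nat -> nat -> R) n m :
  sumn (fun i => sumn (fun j => f i j) m) n = sumn (fun j => sumn (fun i => f i j) n) m.
Proof. induction n; simpl. induction m; simpl; lra. rewrite IHn, <- sumn_plus. reflexivity. Qed.
Lemma sumn_telescope c n : sumn (fun k => c k - c (S k)) n = c O - c n.
Proof. induction n; simpl; [lra| rewrite IHn; lra]. Qed.

Lemma abel_identity (s c : nat -> R) n :
  sumn (fun i => s i * c i) n = sumn s n * c n + sumn (fun k => sumn s (S k) * (c k - c (S k))) n.
Proof. induction n; simpl. lra. rewrite IHn. simpl. ring. Qed.

Lemma abel (s c : nat -> R) n M :
  (forall i, c (S i) <= c i) -> (forall i, 0 <= c i) -> (forall j, (j <= n)%nat -> Rabs (sumn s j) <= M) ->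
  Rabs (sumn (fun i => s i * c i) n) <= M * c O.
Proof. intros Hd Hp HM. rewrite abel_identity.
  eapply Rle_trans. apply Rabs_triang. rewrite Rabs_mult.
  assert (H1 : Rabs (sumn s n) * Rabs (c n) <= M * c n).
  { rewrite (Rabs_right (c n)) by (apply Rle_ge, Hp). apply Rmult_le_compat_r; auto. }
  assert (H2 : Rabs (sumn (fun k => sumn s (S k) * (c k - c (S k))) n) <= M * (c O - c n)).
  { eapply Rle_trans. apply sumn_abs. rewrite <- sumn_telescope, <- sumn_scal. apply sumn_le.
    intros i Hi. rewrite Rabs_mult, (Rabs_right (c i - c (S i))) by (pose proof (Hd i); lra).
    apply Rmult_le_compat_r. pose proof (Hd i); lra. apply HM; lia. }
  lra.
Qed.

Definition ss (n : nat) (t : R) : R := sumn (fun k => sin (INR (S k) * t) / INR (S k)) n.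

Lemma ss_part1 n t : 0 <= t -> Rabs (ss n t) <= INR n * t.
Proof. intros Ht. unfold ss. eapply Rle_trans. apply sumn_abs. rewrite <- sumn_const. apply sumn_le.
  intros i _. unfold Rdiv. rewrite Rabs_mult, Rabs_inv. pose proof (pos_INR i). rewrite S_INR.
  rewrite (Rabs_right (INR i + 1)) by lra. apply Rmult_le_reg_r with (INR i + 1). lra.
  rewrite Rmult_assoc, Rinv_l by lra. eapply Rle_trans. rewrite Rmult_1_r. apply Rabs_sin_le.
  rewrite Rabs_right by nra. lra.
Qed.

Lemma sin_sum_identity a t j :
  2 * sin (t/2) * sumn (fun i => sin ((a + INR i) * t)) j = cos ((a - /2) * t) - cos ((a + INR j - /2) * t).
Proof. induction j; simpl sumn. simpl; replace ((a + 0 - /2) * t) with ((a - /2) * t) by ring; ring.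
  rewrite Rmult_plus_distr_l, IHj.
  replace ((a + INR (S j) - /2) * t) with ((a + INR j) * t + t/2) by (rewrite S_INR; field).
  replace ((a + INR j - /2) * t) with ((a + INR j) * t - t/2) by field.
  rewrite cos_plus, cos_minus. ring.
Qed.

Lemma sin_half_lb t : 0 < t <= PI -> t / 6 <= sin (t/2).
Proof. intros [H1 H2]. pose proof PI_4. pose proof PI2_1.
  destruct (sin_bound (t/2) 0) as [Hl _]. lra. lra.
  eapply Rle_trans; [|exact Hl]. unfold sin_approx. simpl. unfold sin_term. simpl.
  assert (t/2 <= 2) by lra. nra.
Qed.

Lemma sin_partial_bound a t j : 0 < t <= PI ->
  Rabs (sumn (fun i => sin ((a + INR i) * t)) j) <= / sin (t/2).
Proof. intros Ht. pose proof (sin_half_lb t Ht). assert (Hs : 0 < sin (t/2)) by lra.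
  apply Rmult_le_reg_l with (2 * sin (t/2)). lra.
  rewrite <- (Rabs_right (2 * sin (t/2))) at 1 by lra. rewrite <- Rabs_mult, sin_sum_identity.
  replace (2 * sin (t / 2) * / sin (t / 2)) with 2 by (field; lra).
  pose proof (COS_bound ((a - /2) * t)). pose proof (COS_bound ((a + INR j - /2) * t)).
  unfold Rabs; destruct (Rcase_abs _); lra.
Qed.


Lemma ss_main n t : 0 < t <= PI -> Rabs (ss n t) <= 7.
Proof. intros Ht. pose proof PI_4.
  set (z := up (/ t)). destruct (archimed (/ t)) as [Hz1 Hz2]. fold z in Hz1, Hz2.
  assert (Ht' : 0 < / t) by (apply Rinv_0_lt_compat; lra).
  assert (Hz0 : (0 < z)%Z) by (apply lt_0_IZR; lra).
  set (K := (Z.to_nat z - 1)%nat).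
  assert (HK : INR K + 1 = IZR z).
  { unfold K. rewrite minus_INR by lia. rewrite INR_IZR_INZ, Z2Nat.id by lia. simpl; lra. }
  assert (HKt : INR K * t <= 1).
  { assert (INR K <= / t) by lra. apply Rmult_le_compat_r with (r := t) in H0; [|lra].
    rewrite Rinv_l in H0 by lra. lra. }
  assert (HK1t : / INR (S K) < t).
  { rewrite S_INR, HK. rewrite <- (Rinv_inv t). apply Rinv_lt_contravar. nra. auto. }
  destruct (Nat.le_gt_cases n K) as [Hn|Hn].
  - eapply Rle_trans. apply ss_part1; lra. pose proof (le_INR _ _ Hn). nra.
  - replace n with (K + (n - K))%nat by lia. unfold ss. rewrite sumn_split. fold (ss K t).
    eapply Rle_trans. apply Rabs_triang.
    assert (H1 : Rabs (ss K t) <= 1). { eapply Rle_trans. apply ss_part1; lra. lra. }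
    assert (H2 : Rabs (sumn (fun i => sin (INR (S (K + i)) * t) / INR (S (K + i))) (n - K)) <= 6).
    { rewrite (sumn_ext _ (fun i => sin ((INR (S K) + INR i) * t) * / INR (S (K + i)))).
      2:{ intros i _. unfold Rdiv. f_equal. f_equal. rewrite <- plus_INR. f_equal. }
      eapply Rle_trans. apply (abel (fun i => sin ((INR (S K) + INR i) * t)) (fun i => / INR (S (K + i))) _ (/ sin (t/2))).
      - intros i. apply Rinv_le_contravar. apply lt_0_INR; lia. apply le_INR; lia.
      - intros i. left. apply Rinv_0_lt_compat, lt_0_INR; lia.
      - intros j _. apply sin_partial_bound; auto.
      - rewrite Nat.add_0_r. pose proof (sin_half_lb t Ht).
        assert (Hs : 0 < sin (t/2)) by lra.
        apply Rle_trans with (/ sin (t/2) * t). apply Rmult_le_compat_l. left; apply Rinv_0_lt_compat; lra. lra.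
        apply Rle_trans with (/ (t / 6) * t). apply Rmult_le_compat_r. lra.
        apply Rinv_le_contravar. lra. auto. right; field; lra. }
    lra.
Qed.

Lemma ss_odd n t : ss n (- t) = - ss n t.
Proof. unfold ss. rewrite (sumn_ext _ (fun k => -1 * (sin (INR (S k) * t) / INR (S k)))).
  rewrite sumn_scal; ring.
  intros i _. replace (INR (S i) * - t) with (- (INR (S i) * t)) by ring. rewrite sin_neg. unfold Rdiv; ring. Qed.

Lemma ss_period n t z : ss n (t + 2 * IZR z * PI) = ss n t.
Proof. unfold ss. apply sumn_ext. intros i _. f_equal.
  replace (INR (S i) * (t + 2 * IZR z * PI)) with (INR (S i) * t + 2 * IZR (Z.of_nat (S i) * z) * PI).
  apply sin_periodZ. rewrite mult_IZR, <- INR_IZR_INZ. ring. Qed.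

Lemma ss_bound n t : Rabs (ss n t) <= 7.
Proof. pose proof PI_pos.
  set (z := (up ((t + PI) / (2 * PI)) - 1)%Z).
  destruct (archimed ((t + PI) / (2 * PI))) as [H1 H2].
  assert (Hz1 : IZR z <= (t + PI) / (2*PI)) by (unfold z; rewrite minus_IZR; change (IZR 1) with 1; lra).
  assert (Hz2 : (t + PI) / (2*PI) < IZR z + 1) by (unfold z; rewrite minus_IZR; change (IZR 1) with 1; lra).
  set (t' := t - 2 * IZR z * PI).
  assert (Ht1 : - PI <= t').
  { unfold t'. apply Rmult_le_compat_r with (r := 2*PI) in Hz1; [|lra].
    unfold Rdiv in Hz1. rewrite Rmult_assoc, Rinv_l in Hz1 by lra. lra. }
  assert (Ht2 : t' < PI).
  { unfold t'. apply Rmult_lt_compat_r with (r := 2*PI) in Hz2; [|lra].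
    unfold Rdiv in Hz2. rewrite Rmult_assoc, Rinv_l in Hz2 by lra. lra. }
  replace t with (t' + 2 * IZR z * PI) by (unfold t'; ring). rewrite ss_period.
  destruct (Rtotal_order t' 0) as [Hn|[H0|Hp]].
  - replace t' with (- (- t')) by ring. rewrite ss_odd, Rabs_Ropp. apply ss_main; lra.
  - rewrite H0. unfold ss. rewrite (sumn_ext _ (fun _ => 0)). rewrite sumn_const, Rabs_right; lra.
    intros i _. rewrite Rmult_0_r, sin_0. unfold Rdiv; ring.
  - apply ss_main; lra.
Qed.


Definition dterm (j : nat) : (Z*Z)*C := ((Z.of_nat j, - Z.of_nat j)%Z, RtoC 1).
Fixpoint dL n : trigpoly := match n with O => nil | S n' => dterm n' :: dL n' end.
Definition wterm k : (Z*Z)*C := ((Z.of_nat (S k), - Z.of_nat (S k))%Z, RtoC (/ INR (S k))).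
Definition nterm k : (Z*Z)*C := ((- Z.of_nat (S k), Z.of_nat (S k))%Z, RtoC (- / INR (S k))).
Fixpoint psiL n : trigpoly := match n with O => nil | S n' => wterm n' :: nterm n' :: psiL n' end.
Fixpoint wL n : trigpoly := match n with O => nil | S n' => wterm n' :: wL n' end.
Definition oneT : trigpoly := ((0%Z, 0%Z), RtoC 1) :: nil.
Definition fF n := conjmul (dL n) (dL n).

Lemma Px_psiL n : Px (psiL n) = wL n.
Proof. induction n; auto. unfold Px in *. simpl. rewrite IHn. reflexivity. Qed.

Lemma lsum_dL (f : (Z*Z)*C -> R) n : lsum f (dL n) = sumn (fun j => f (dterm j)) n.
Proof. induction n; simpl; auto. rewrite <- IHn. reflexivity. Qed.
Lemma lsum_wL (f : (Z*Z)*C -> R) n : lsum f (wL n) = sumn (fun j => f (wterm j)) n.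
Proof. induction n; simpl; auto. rewrite <- IHn. reflexivity. Qed.

Lemma lsum_flat_map {A B} (f : B -> R) (g : A -> list B) l :
  lsum f (flat_map g l) = lsum (fun a => lsum f (g a)) l.
Proof. induction l; simpl; auto. rewrite lsum_app, IHl. reflexivity. Qed.
Lemma lsum_map {A B} (f : B -> R) (g : A -> B) l : lsum f (map g l) = lsum (fun a => f (g a)) l.
Proof. induction l; simpl; auto. rewrite IHl. reflexivity. Qed.

Lemma S2_conjmul p q w :
  S2 (conjmul p q) w = lsum (fun a => lsum (fun b => lsum (fun s => dlt (cm1 a b) s) w) q) p.
Proof. unfold S2, conjmul. rewrite lsum_flat_map. apply lsum_ext. intros a _.
  rewrite lsum_map. reflexivity. Qed.

Lemma S2_app p1 p2 q : S2 (p1 ++ p2) q = S2 p1 q + S2 p2 q.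
Proof. unfold S2. apply lsum_app. Qed.

Lemma S2_filter (P Q : (Z*Z)*C -> bool) p q :
  (forall t s, In t p -> In s q -> fst t = fst s -> P t = Q s) ->
  S2 (filter P p) q = S2 p (filter Q q).
Proof. intros H. unfold S2. rewrite lsum_filter. apply lsum_ext. intros t Ht.
  rewrite lsum_filter.
  transitivity (lsum (fun s => if P t then dlt t s else 0) q).
  { destruct (P t); auto. induction q; simpl; auto. rewrite <- IHq; auto. lra. intros; apply H; simpl; auto. }
  apply lsum_ext. intros s Hs. unfold dlt.
  destruct (Z.eqb_spec (fst (fst t)) (fst (fst s))); destruct (Z.eqb_spec (snd (fst t)) (snd (fst s))); simpl;
    try (destruct (P t), (Q s); reflexivity).
  rewrite (H t s Ht Hs). reflexivity. destruct t as [[? ?] ?], s as [[? ?] ?]; simpl in *; subst; auto.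
Qed.

Lemma Cmod_real a : 0 <= a -> Cmod (a, 0) = a.
Proof. intros H. unfold Cmod; simpl. replace (a * (a * 1) + 0 * (0 * 1)) with (Rsqr a) by (unfold Rsqr; ring).
  apply sqrt_Rsqr; auto. Qed.

Lemma tp_eval_one x y : tp_eval oneT x y = RtoC 1.
Proof. unfold oneT. rewrite tp_eval_cons, tp_eval_nil. simpl.
  rewrite !Rmult_0_l, Rplus_0_r, cos_0, sin_0. unfold Cplus, Cmult, RtoC; apply injective_projections; simpl; ring. Qed.

Lemma Pf_one p x y : Pf p oneT x y = fst (tp_eval p x y).
Proof. unfold Pf. rewrite tp_eval_one. destruct (tp_eval p x y); simpl. ring. Qed.

Lemma I2_ext F G : (forall x y, F x y = G x y) -> I2 F = I2 G.
Proof. intros H. unfold I2. apply RInt_ext. intros x _. apply RInt_ext. intros y _. apply H. Qed.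

Lemma L1norm_real p : (forall x y, snd (tp_eval p x y) = 0 /\ 0 <= fst (tp_eval p x y)) -> L1norm p = S2 p oneT.
Proof. intros H. rewrite L1norm_I2. rewrite (I2_ext _ (Pf p oneT)).
  rewrite I2_Pf. pose proof PI_pos. field. lra.
  intros x y. rewrite Pf_one. destruct (H x y) as [H1 H2]. destruct (tp_eval p x y) as [a b]; simpl in *.
  subst. apply Cmod_real; auto. Qed.

Lemma fF_real n x y : snd (tp_eval (fF n) x y) = 0 /\ 0 <= fst (tp_eval (fF n) x y).
Proof. unfold fF. rewrite tp_eval_conjmul. destruct (tp_eval (dL n) x y) as [a b]. simpl. split. ring. nra. Qed.

Lemma In_conjmul t p q : In t (conjmul p q) -> exists a b, In a p /\ In b q /\ t = cm1 a b.
Proof. unfold conjmul. rewrite in_flat_map. intros [a [Ha Ht]]. rewrite in_map_iff in Ht.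
  destruct Ht as [b [Hb Hb']]. exists a, b. repeat split; auto. Qed.
Lemma In_dL a n : In a (dL n) -> exists j, a = dterm j.
Proof. induction n; simpl; intros H; [contradiction|]. destruct H; eauto. Qed.

Lemma tp_eval_const0 l x y :
  (forall t, In t l -> fst t = (0%Z, 0%Z) /\ snd t = RtoC 1) -> tp_eval l x y = (INR (length l), 0).
Proof. induction l; intros H. reflexivity.
  rewrite tp_eval_cons, IHl by (intros; apply H; simpl; auto).
  destruct (H a (or_introl eq_refl)) as [H1 H2]. destruct a as [[m n] c]. simpl in H1, H2.
  injection H1; intros; subst. simpl term. rewrite !Rmult_0_l, Rplus_0_r, cos_0, sin_0.
  change (length (((0%Z,0%Z),RtoC 1) :: l)) with (S (length l)). rewrite S_INR.
  unfold Cplus, Cmult, RtoC; apply injective_projections; simpl; ring. Qed.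

Definition PP (p : trigpoly) := Px (Py p).

Lemma PP_terms n t : In t (PP (fF n)) -> fst t = (0%Z, 0%Z) /\ snd t = RtoC 1.
Proof. unfold PP, Px, Py. rewrite !filter_In. intros [[Ht H1] H2].
  apply In_conjmul in Ht. destruct Ht as [a [b [Ha [Hb ->]]]].
  apply In_dL in Ha. apply In_dL in Hb. destruct Ha as [j ->], Hb as [l ->].
  unfold cm1, dterm in *; simpl in *. apply Z.leb_le in H1. apply Z.leb_le in H2. split.
  f_equal; lia. unfold Cmult, Cconj, RtoC; apply injective_projections; simpl; ring. Qed.

Lemma PP_real n x y : snd (tp_eval (PP (fF n)) x y) = 0 /\ 0 <= fst (tp_eval (PP (fF n)) x y).
Proof. rewrite tp_eval_const0 by apply PP_terms. simpl. split; auto. apply pos_INR. Qed.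

Lemma single_hit j c n v :
  sumn (fun l => if Nat.eqb j (l + c) then v else 0) n = if (Nat.leb c j && Nat.ltb (j - c) n)%bool then v else 0.
Proof. induction n; simpl sumn.
  - destruct (Nat.leb c j), (Nat.ltb_spec (j - c) 0); simpl; try lia; lra.
  - rewrite IHn. destruct (Nat.eqb_spec j (n + c)); destruct (Nat.leb_spec c j); destruct (Nat.ltb_spec (j - c) n);
      destruct (Nat.ltb_spec (j - c) (S n)); simpl; try lia; try lra.
Qed.

Lemma dlt_one j l : dlt (cm1 (dterm j) (dterm l)) ((0%Z, 0%Z), RtoC 1) = if Nat.eqb j (l + 0) then 1 else 0.
Proof. unfold dlt, cm1, dterm; simpl.
  destruct (Z.eqb_spec (Z.of_nat j - Z.of_nat l) 0); destruct (Z.eqb_spec (- Z.of_nat j - - Z.of_nat l) 0);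
  destruct (Nat.eqb_spec j (l + 0)); simpl; try lia; try ring. Qed.

Lemma dlt_w j l k : dlt (cm1 (dterm j) (dterm l)) (wterm k) = if Nat.eqb j (l + S k) then / INR (S k) else 0.
Proof. unfold dlt, cm1, dterm, wterm; cbn [fst snd].
  destruct (Z.eqb_spec (Z.of_nat j - Z.of_nat l) (Z.of_nat (S k))); destruct (Z.eqb_spec (- Z.of_nat j - - Z.of_nat l) (- Z.of_nat (S k)));
  destruct (Nat.eqb_spec j (l + S k)); cbn [andb]; try lia; try ring.
  unfold Cmult, Cconj, RtoC; cbn [fst snd]; ring. Qed.

Lemma S2_fF_one n : S2 (fF n) oneT = INR n.
Proof. unfold fF. rewrite S2_conjmul, lsum_dL. rewrite <- (Rmult_1_r (INR n)), <- sumn_const.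
  apply sumn_ext. intros j Hj. rewrite lsum_dL. unfold oneT.
  rewrite (sumn_ext _ (fun l => if Nat.eqb j (l + 0) then 1 else 0)).
  rewrite single_hit. destruct (Nat.leb_spec 0 j); destruct (Nat.ltb_spec (j - 0) n); simpl; try lia; lra.
  intros l _. simpl. rewrite dlt_one. ring. Qed.

Lemma sumn_prefix f a b : (forall i, 0 <= f i) -> (a <= b)%nat -> sumn f a <= sumn f b.
Proof. intros Hf Hab. replace b with (a + (b - a))%nat by lia. rewrite sumn_split.
  assert (0 <= sumn (fun i => f (a + i)%nat) (b - a)) by (apply sumn_nonneg; auto). lra. Qed.

Definition Harm (m : nat) : R := sumn (fun k => / INR (S k)) m.

Lemma H_mono a b : (a <= b)%nat -> Harm a <= Harm b.
Proof. intros Hab. replace b with (a + (b - a))%nat by lia. unfold Harm. rewrite sumn_split.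
  assert (0 <= sumn (fun i => / INR (S (a + i))) (b - a)).
  { apply sumn_nonneg. intros; left; apply Rinv_0_lt_compat, lt_0_INR; lia. } lra. Qed.

Lemma H_double m : (1 <= m)%nat -> Harm m + /2 <= Harm (m + m).
Proof. intros Hm. unfold Harm. rewrite sumn_split.
  assert (H0 : INR m * / INR (m + m) <= sumn (fun i => / INR (S (m + i))) m).
  { apply sumn_ge. intros i Hi. apply Rinv_le_contravar. apply lt_0_INR; lia. apply le_INR; lia. }
  rewrite plus_INR in H0. replace (INR m * / (INR m + INR m)) with (/2) in H0. lra.
  assert (0 < INR m) by (apply lt_0_INR; lia). field. lra. Qed.

Lemma H_pow p : INR p / 2 <= Harm (2 ^ p).
Proof. induction p. simpl. unfold Harm; simpl. lra.
  rewrite S_INR. simpl Nat.pow. replace (2 ^ p + (2 ^ p + 0))%nat with (2^p + 2^p)%nat by lia.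
  pose proof (H_double (2^p) ltac:(pose proof (Nat.pow_nonzero 2 p); lia)). lra. Qed.

Lemma S2_lower K : INR (S K) * Harm K <= S2 (fF (K + S K)) (wL (K + S K)).
Proof. set (n := (K + S K)%nat).
  set (X := fun j => lsum (fun b => lsum (fun s => dlt (cm1 (dterm j) b) s) (wL n)) (dL n)).
  assert (HS : S2 (fF n) (wL n) = sumn X (K + S K)).
  { unfold X, fF. rewrite S2_conjmul, lsum_dL. reflexivity. }
  rewrite HS, sumn_split.
  assert (HX : forall j, 0 <= X j).
  { intros j. unfold X. rewrite lsum_dL. apply sumn_nonneg. intros l _. rewrite lsum_wL. apply sumn_nonneg.
    intros k _. rewrite dlt_w. destruct (Nat.eqb j (l + S k)). left; apply Rinv_0_lt_compat, lt_0_INR; lia. lra. }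
  assert (H1 : 0 <= sumn X K) by (apply sumn_nonneg; auto).
  assert (H2 : INR (S K) * Harm K <= sumn (fun i => X (K + i)%nat) (S K)).
  { apply sumn_ge. intros i Hi. unfold X. rewrite lsum_dL.
    rewrite (sumn_ext _ (fun l => sumn (fun k => if Nat.eqb (K + i) (l + S k) then / INR (S k) else 0) n)).
    2:{ intros l _. rewrite lsum_wL. apply sumn_ext. intros k _. apply dlt_w. }
    rewrite sumn_swap.
    eapply Rle_trans; [|apply (sumn_prefix _ K n)].
    2:{ intros k. apply sumn_nonneg. intros l _. destruct (Nat.eqb _ _). left; apply Rinv_0_lt_compat, lt_0_INR; lia. lra. }
    2:{ unfold n; lia. }
    unfold Harm. apply sumn_le. intros k Hk. rewrite single_hit.
    destruct (Nat.leb_spec (S k) (K + i)); destruct (Nat.ltb_spec (K + i - S k) n); simpl; try (unfold n in *; lia). lra. }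
  lra.
Qed.


Lemma tp_eval_psiL n x y : tp_eval (psiL n) x y = (0, 2 * ss n (x - y)).
Proof. induction n. unfold ss; simpl. unfold RtoC; apply injective_projections; simpl; ring.
  change (psiL (S n)) with (wterm n :: nterm n :: psiL n). rewrite !tp_eval_cons, IHn.
  unfold wterm, nterm, term.
  rewrite opp_IZR, <- INR_IZR_INZ.
  replace (INR (S n) * x + - INR (S n) * y) with (INR (S n) * (x - y)) by ring.
  replace (- INR (S n) * x + INR (S n) * y) with (- (INR (S n) * (x - y))) by ring.
  rewrite cos_neg, sin_neg.
  replace (ss (S n) (x-y)) with (sin (INR (S n) * (x-y)) / INR (S n) + ss n (x-y)) by reflexivity.
  assert (INR (S n) <> 0) by (apply not_0_INR; lia).
  unfold Cplus, Cmult, RtoC; apply injective_projections; cbn [fst snd]; field; auto.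
Qed.

Lemma Cmod_psiL n x y : Cmod (tp_eval (psiL n) x y) <= 14.
Proof. rewrite tp_eval_psiL. unfold Cmod; cbn [fst snd].
  replace (0 ^ 2 + (2 * ss n (x - y)) ^ 2) with (Rsqr (2 * ss n (x - y))) by (unfold Rsqr; ring).
  rewrite sqrt_Rsqr_abs, Rabs_mult, Rabs_right by lra. pose proof (ss_bound n (x - y)). lra. Qed.

Lemma psiL_pred n s : In s (psiL n) ->
  (Z.leb 0 (fst (fst s)) && Z.ltb (snd (fst s)) 0)%bool = Z.leb 0 (fst (fst s)).
Proof. induction n; simpl; intros H; [contradiction|]. destruct H as [<-|[<-|H]].
  - unfold wterm; cbn [fst snd]. destruct (Z.leb_spec 0 (Z.of_nat (S n))), (Z.ltb_spec (- Z.of_nat (S n)) 0); simpl; auto; lia.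
  - unfold nterm; cbn [fst snd]. destruct (Z.leb_spec 0 (- Z.of_nat (S n))); simpl; auto; lia.
  - auto.
Qed.

Lemma filter_ext' {A} (P Q : A -> bool) l : (forall a, P a = Q a) -> filter P l = filter Q l.
Proof. intros H; induction l; simpl; auto. rewrite H, IHl; auto. Qed.

Lemma L1_x_lower g N : S2 g (wL N) <= 14 * triple_x g.
Proof. unfold triple_x. pose proof (L1norm_ge0 (Pmx (Py g))). pose proof (L1norm_ge0 (Pmx (Pmy g))).
  assert (S2 (Px g) (psiL N) <= 14 * L1norm (Px g)).
  { apply dual_bound. lra. apply Cmod_psiL. }
  unfold Px at 1 in H1. rewrite (S2_filter _ (fun t => Z.leb 0 (fst (fst t)))) in H1.
  2:{ intros t s _ _ E. rewrite E. reflexivity. }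
  fold (Px (psiL N)) in H1. rewrite Px_psiL in H1. lra.
Qed.

Lemma S2_y_eq h N : S2 (Pmy (Px h)) (psiL N) = S2 h (wL N).
Proof. unfold Pmy, Px. rewrite filter_filter2.
  rewrite (S2_filter (fun t => (Z.leb 0 (fst (fst t)) && Z.ltb (snd (fst t)) 0)%bool) (fun t => Z.leb 0 (fst (fst t))) h (psiL N)).
  2:{ intros t s _ Hs E. rewrite E. apply psiL_pred with N; auto. }
  fold (Px (psiL N)). rewrite Px_psiL. reflexivity. Qed.

Lemma L1_y_lower h N : S2 h (wL N) <= 14 * triple_y h.
Proof. unfold triple_y. pose proof (L1norm_ge0 (Py h)). pose proof (L1norm_ge0 (Pmy (Pmx h))).
  assert (S2 (Pmy (Px h)) (psiL N) <= 14 * L1norm (Pmy (Px h))).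
  { apply dual_bound. lra. apply Cmod_psiL. }
  rewrite S2_y_eq in H1. lra.
Qed.

Lemma S2_decomp f g h q : (forall x y, tp_eval f x y = Cplus (tp_eval g x y) (tp_eval h x y)) ->
  S2 f q = S2 g q + S2 h q.
Proof. intros Hf. rewrite <- S2_app. pose proof PI_pos.
  assert (E : I2 (Pf f q) = I2 (Pf (g ++ h) q)).
  { apply I2_ext. intros x y. unfold Pf. rewrite tp_eval_app, Hf. reflexivity. }
  rewrite !I2_Pf in E. apply Rmult_eq_reg_l in E; auto. nra. Qed.

Lemma tp_eval_dL0 n : tp_eval (dL n) 0 0 = (INR n, 0).
Proof. induction n. reflexivity. change (dL (S n)) with (dterm n :: dL n).
  rewrite tp_eval_cons, IHn. unfold dterm, term. rewrite !Rmult_0_r, Rplus_0_r, cos_0, sin_0, S_INR.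
  unfold Cplus, Cmult, RtoC; apply injective_projections; cbn [fst snd]; ring. Qed.

Lemma fF_nonzero n : (1 <= n)%nat -> tp_eval (fF n) 0 0 <> RtoC 0.
Proof. intros Hn E. unfold fF in E. rewrite tp_eval_conjmul, tp_eval_dL0 in E.
  apply (f_equal fst) in E. unfold Cmult, Cconj, RtoC in E; cbn [fst snd] in E.
  assert (0 < INR n) by (apply lt_0_INR; lia). nra. Qed.

Lemma LHS_bound n : L1norm (Px (Py (fF n))) + L1norm (I_minus_PxPy (fF n)) <= 3 * INR n.
Proof. pose proof PI_pos.
  set (f := fF n). set (b := Px (Py f)). set (a := I_minus_PxPy f).
  assert (Hb : L1norm b = INR n).
  { unfold b. rewrite L1norm_real by (apply PP_real). unfold Px, Py. rewrite filter_filter2.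
    rewrite (S2_filter _ (fun t => (Z.leb 0 (snd (fst t)) && Z.leb 0 (fst (fst t)))%bool)).
    2:{ intros t s _ _ E. rewrite E; auto. }
    simpl. apply S2_fF_one. }
  assert (Hfb : forall x y, Cplus (tp_eval b x y) (tp_eval a x y) = tp_eval f x y).
  { intros x y. unfold a, b, I_minus_PxPy, Px, Py. rewrite filter_filter2.
    rewrite <- (tp_eval_filter (fun t => (Z.leb 0 (snd (fst t)) && Z.leb 0 (fst (fst t)))%bool) f x y).
    f_equal. f_equal. apply filter_ext'. intros t. rewrite Bool.andb_comm. reflexivity. }
  assert (Ha : L1norm a <= 2 * INR n).
  { rewrite L1norm_I2.
    assert (Hle : I2 (fun x y => Cmod (tp_eval a x y)) <= I2 (Pf (f ++ b) oneT)).
    { destruct (Cmod_int a). destruct (Pf_int (f ++ b) oneT). apply I2_le; auto.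
      intros x y. rewrite Pf_one, tp_eval_app.
      pose proof (fF_real n x y) as [F1 F2]. pose proof (PP_real n x y) as [B1 B2]. unfold PP in B1, B2. fold f in F1, F2, B1, B2. fold b in B1, B2.
      pose proof (Hfb x y) as Hxy.
      destruct (tp_eval a x y) as [a1 a2], (tp_eval b x y) as [b1 b2], (tp_eval f x y) as [f1 f2].
      cbn [fst snd] in *. unfold Cplus in Hxy. injection Hxy; intros E2 E1.
      replace (a1, a2) with (Cplus (f1, f2) (Copp (b1, b2))) by
        (unfold Cplus, Copp; apply injective_projections; cbn [fst snd]; lra).
      eapply Rle_trans. apply Cmod_triangle. rewrite Cmod_opp. subst f2 b2.
      rewrite !Cmod_real by auto. unfold Cplus; cbn [fst]. lra. }
    rewrite I2_Pf, S2_app in Hle.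
    assert (S2 b oneT = INR n).
    { rewrite <- Hb. symmetry. apply L1norm_real. apply PP_real. }
    unfold f in Hle. rewrite S2_fF_one in Hle. fold f in Hle. rewrite H0 in Hle.
    apply Rmult_le_reg_l with (4 * PI^2). nra. unfold Rdiv.
    replace (4 * PI ^ 2 * (I2 (fun x y => Cmod (tp_eval a x y)) * / (4 * PI ^ 2))) with
      (I2 (fun x y => Cmod (tp_eval a x y))) by (field; lra). lra. }
  lra.
Qed.


Theorem mainTheorem3 : forall eps : R, 0 < eps ->
  exists f : trigpoly,
    (exists x y, tp_eval f x y <> RtoC 0) /\
    Rbar_le (Finite (L1norm (Px (Py f)) + L1norm (I_minus_PxPy f)))
            (Rbar_mult (Finite eps) (triple f)).
Proof.
  intros eps Heps.
  assert (Hq : 0 < 168 / eps) by (apply Rdiv_lt_0_compat; lra).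
  set (p := Z.to_nat (up (168 / eps))).
  assert (Hp : 168 / eps <= INR p).
  { unfold p. destruct (archimed (168/eps)) as [A1 A2].
    assert (Hz : (0 < up (168 / eps))%Z) by (apply lt_0_IZR; lra).
    rewrite INR_IZR_INZ, Z2Nat.id by lia. lra. }
  set (K := (2 ^ p)%nat). set (N := (K + S K)%nat).
  exists (fF N). split.
  { exists 0, 0. apply fF_nonzero. unfold N; lia. }
  set (c := INR (S K) * Harm K / 14).
  assert (Hlb : Rbar_le (Finite c) (triple (fF N))).
  { unfold triple. destruct (Glb_Rbar_correct (fun r => exists g h : trigpoly,
      (forall x y, tp_eval (fF N) x y = Cplus (tp_eval g x y) (tp_eval h x y)) /\
      r = triple_x g + triple_y h)) as [_ Hglb].
    apply Hglb. intros r [g [h [Hfgh ->]]]. simpl.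
    pose proof (S2_decomp _ _ _ (wL N) Hfgh) as Hd.
    pose proof (L1_x_lower g N). pose proof (L1_y_lower h N). pose proof (S2_lower K) as HL.
    fold N in HL. unfold c. lra. }
  pose proof (LHS_bound N) as HLHS.
  assert (Hineq : 3 * INR N <= eps * c).
  { pose proof (H_pow p) as HH. fold K in HH.
    assert (HK : 84 / eps <= Harm K) by (unfold Rdiv in *; lra).
    unfold N, c. rewrite plus_INR, S_INR. pose proof (pos_INR K) as HK0.
    assert (He : eps * (84 / eps) = 84) by (field; lra).
    assert (He2 : eps * Harm K >= 84) by nra.
    nra. }
  destruct (triple (fF N)) as [v| |] eqn:Ht; simpl in Hlb |- *.
  - nra.
  - unfold Rbar_mult, Rbar_mult'. destruct (Rle_dec 0 eps); [|lra].
    destruct (Rle_lt_or_eq_dec 0 eps r); [simpl; auto|lra].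
  - contradiction.
Qed.
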